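(* Let $n\ge1$, let $f:\{0,1\}^n\to\{0,1\}^n$ be a Boolean model, let $J$ be a nonempty subset of $\{1,\dots,n\}$, and let $h$ be a refinement of $f$ on $X=\prod_{j=1}^n\{0,1,\dots,m_j\}$, where $m_j\ge1$ are integers with $m_j>1$ if and only if $j\in J$. Let $x,y\in X$ and suppose there is a trajectory from $x$ to $y$ in the asynchronous state transition graph of $h$. Then for every element $\hat x\in X_{^Jm.p.}$ compatible with $x$ there exists a trajectory $\hat x\to\cdots\to\hat y$ in the state transition graph of the partial $^J$m.p. dynamics of $f$ such that $\hat y$ is compatible with $y$.
   Context: Asynchronous dynamics of $h:X\to X$ (with $h_j(x)-x_j\in\{-1,0,1\}$): transition $x\to y$ if there is $i_0$ with $x_{i_0}\ne h_{i_0}(x)$, $y_{i_0}=x_{i_0}+\mathrm{sign}(h_{i_0}(x)-x_{i_0})$, $y_j=x_j$ for $j\neq i_0$; a trajectory is a finite sequence of consecutive transitions. For $x\in X$, $\alpha(x)=\{x'\in\{0,1\}^n:\forall j,(x_j=0\Rightarrow x'_j=0),(x_j=m_j\Rightarrow x'_j=1)\}$. A multivalued model $h:X\to X$ (with $h_j(x)-x_j\in\{-1,0,1\}$) is a refinement of $f$ if for all $x\in X$ and $j$: $h_j(x)<x_j\Rightarrow\exists x'\in\alpha(x), f_j(x')<x'_j$, and $h_j(x)>x_j\Rightarrow\exists x'\in\alpha(x), f_j(x')>x'_j$. Partial most permissive scheme: $X_{^Jm.p.}=\prod_{j=1}^n\mathcal A_j$ with $\mathcal A_j=\{0,1,i,d\}$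 if $j\in J$ and $\mathcal A_j=\{0,1\}$ otherwise ($i,d$ are formal symbols). For $x\in X_{^Jm.p.}$, $\gamma(x)=\{x'\in\{0,1\}^n:\forall j,(x_j=0\Rightarrow x'_j=0),(x_j=1\Rightarrow x'_j=1)\}$. There is a transition $x\to y$ in $X_{^Jm.p.}$ if there is $j_0$ with $y_j=x_j$ for $j\neq j_0$ and one of: (a) $x_{j_0}\in\{0,d\}$, $\exists x'\in\gamma(x)$ with $f_{j_0}(x')=1$, and $y_{j_0}=i$; (b) $x_{j_0}\in\{1,i\}$, $\exists x'\in\gamma(x)$ with $f_{j_0}(x')=0$, and $y_{j_0}=d$; (c) $x_{j_0}=i$ and $y_{j_0}=1$; (d) $x_{j_0}=d$ and $y_{j_0}=0$; (e) $j_0\notin J$, $x_{j_0}=0$, $\exists x'\in\gamma(x)$ with $f_{j_0}(x')=1$, and $y_{j_0}=1$; (f) $j_0\notin J$, $x_{j_0}=1$, $\exists x'\in\gamma(x)$ with $f_{j_0}(x')=0$, and $y_{j_0}=0$. An element $\hat x\in X_{^Jm.p.}$ is compatible with $x\in X$ if for every $j$: $x_j=0\Rightarrow\hat x_j=0$; $x_j=m_j\Rightarrow\hat x_j=1$; and $x_j\notin\{0,m_j\}\Rightarrow\hat x_j\in\{i,d\}$. *)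

(* Defs.v *)
From Stdlib Require Import Relations.
From mathcomp Require Import all_boot.
Set Implicit Arguments. Unset Strict Implicit. Unset Printing Implicit Defensive.

(* Components are indexed by 'I_n (paper: 1..n).  Boolean states: {ffun 'I_n -> bool};
   multivalued states: {ffun 'I_n -> nat} restricted to X = prod_j {0,..,m_j}. *)
Definition bstate n := {ffun 'I_n -> bool}.
Definition mstate n := {ffun 'I_n -> nat}.

Definition inX n (m : 'I_n -> nat) (x : mstate n) : Prop := forall j, x j <= m j.

Definition alpha n (m : 'I_n -> nat) (x : mstate n) (x' : bstate n) : Prop :=
  forall j, (x j = 0 -> x' j = false) /\ (x j = m j -> x' j = true).

(* h is a refinement of f (for all x in X); bool coerced to nat (false=0, true=1). *)
Definition refinement n (m : 'I_n -> nat) (f : bstate n -> bstate n)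
  (h : mstate n -> mstate n) : Prop :=
  forall x, inX m x -> forall j,
    (h x j < x j -> exists2 x', alpha m x x' & (f x' j < x' j)%N) /\
    (h x j > x j -> exists2 x', alpha m x x' & (f x' j > x' j)%N).

Definition multivalued_model n (m : 'I_n -> nat) (h : mstate n -> mstate n) : Prop :=
  forall x, inX m x -> inX m (h x) /\ forall j, h x j <= (x j).+1 /\ x j <= (h x j).+1.

Definition async_step n (m : 'I_n -> nat) (h : mstate n -> mstate n) (x y : mstate n) : Prop :=
  inX m x /\ inX m y /\
  exists i0, x i0 != h x i0 /\
    y i0 = (if h x i0 < x i0 then (x i0).-1 else (x i0).+1) /\
    forall j, j != i0 -> y j = x j.

Inductive mpval := M0 | M1 | Mi | Md.
Definition mpstate n := {ffun 'I_n -> mpval}.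

Definition inXmp n (J : {set 'I_n}) (x : mpstate n) : Prop :=
  forall j, j \notin J -> x j = M0 \/ x j = M1.

Definition gamma n (x : mpstate n) (x' : bstate n) : Prop :=
  forall j, (x j = M0 -> x' j = false) /\ (x j = M1 -> x' j = true).

Definition mp_step n (J : {set 'I_n}) (f : bstate n -> bstate n) (x y : mpstate n) : Prop :=
  inXmp J x /\ inXmp J y /\
  exists j0, (forall j, j != j0 -> y j = x j) /\
   (((x j0 = M0 \/ x j0 = Md) /\ (exists2 x', gamma x x' & f x' j0 = true) /\ y j0 = Mi) \/
       ((x j0 = M1 \/ x j0 = Mi) /\ (exists2 x', gamma x x' & f x' j0 = false) /\ y j0 = Md) \/
       (x j0 = Mi /\ y j0 = M1) \/
       (x j0 = Md /\ y j0 = M0) \/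
       (j0 \notin J /\ x j0 = M0 /\ (exists2 x', gamma x x' & f x' j0 = true) /\ y j0 = M1) \/
     (j0 \notin J /\ x j0 = M1 /\ (exists2 x', gamma x x' & f x' j0 = false) /\ y j0 = M0)).

Definition compatible n (m : 'I_n -> nat) (x : mstate n) (xh : mpstate n) : Prop :=
  forall j, (x j = 0 -> xh j = M0) /\ (x j = m j -> xh j = M1) /\
            (x j <> 0 -> x j <> m j -> xh j = Mi \/ xh j = Md).

Definition async_traj n m h := clos_refl_trans (mstate n) (@async_step n m h).
Definition mp_traj n J f := clos_refl_trans (mpstate n) (@mp_step n J f).

(* Main.v *)
Require Import Defs.
From mathcomp Require Import all_boot.
From Stdlib Require Import Relations.
From mathcomp Require Import zify.
Set Implicit Arguments. Unset Strict Implicit. Unset Printing Implicit Defensive.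

Definition upd n (xh : mpstate n) (i : 'I_n) (v : mpval) : mpstate n :=
  [ffun j => if j == i then v else xh j].

Lemma upd_same n (xh : mpstate n) i v : upd xh i v i = v.
Proof. by rewrite ffunE eqxx. Qed.
Lemma upd_other n (xh : mpstate n) i v j : j != i -> upd xh i v j = xh j.
Proof. by move=> ne; rewrite ffunE (negbTE ne). Qed.

Lemma inXmp_upd n J (xh : mpstate n) i v :
  inXmp J xh -> (i \in J \/ v = M0 \/ v = M1) -> inXmp J (upd xh i v).
Proof.
move=> H Hv j hj; rewrite ffunE; case: eqP => [E|_]; last exact: H.
subst j; case: Hv => [Hi|//]; by rewrite Hi in hj.
Qed.

Ltac finstep i :=
  split; [done|split; [apply: inXmp_upd; by eauto|exists i; split; [move=> j ne; exact: upd_other|]]].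

Lemma stepA n J (f : bstate n -> bstate n) (xh : mpstate n) i x' : inXmp J xh -> i \in J ->
  (xh i = M0 \/ xh i = Md) -> gamma xh x' -> f x' i = true -> mp_step J f xh (upd xh i Mi).
Proof. move=> H Hi Hx G F; finstep i. left; split=> //; split; [by exists x'|exact: upd_same]. Qed.
Lemma stepB n J (f : bstate n -> bstate n) (xh : mpstate n) i x' : inXmp J xh -> i \in J ->
  (xh i = M1 \/ xh i = Mi) -> gamma xh x' -> f x' i = false -> mp_step J f xh (upd xh i Md).
Proof. move=> H Hi Hx G F; finstep i. right; left; split=> //; split; [by exists x'|exact: upd_same]. Qed.
Lemma stepC n J (f : bstate n -> bstate n) (xh : mpstate n) i : inXmp J xh -> i \in J ->
  xh i = Mi -> mp_step J f xh (upd xh i M1).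
Proof. move=> H Hi Hx; finstep i. right; right; left; split=> //; exact: upd_same. Qed.
Lemma stepD n J (f : bstate n -> bstate n) (xh : mpstate n) i : inXmp J xh -> i \in J ->
  xh i = Md -> mp_step J f xh (upd xh i M0).
Proof. move=> H Hi Hx; finstep i. right; right; right; left; split=> //; exact: upd_same. Qed.
Lemma stepE n J (f : bstate n -> bstate n) (xh : mpstate n) i x' : inXmp J xh -> i \notin J ->
  xh i = M0 -> gamma xh x' -> f x' i = true -> mp_step J f xh (upd xh i M1).
Proof. move=> H Hi Hx G F; finstep i. do 4 right; left; split=> //; split=> //; split; [by exists x'|exact: upd_same]. Qed.
Lemma stepF n J (f : bstate n -> bstate n) (xh : mpstate n) i x' : inXmp J xh -> i \notin J ->
  xh i = M1 -> gamma xh x' -> f x' i = false -> mp_step J f xh (upd xh i M0).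
Proof. move=> H Hi Hx G F; finstep i. do 5 right; split=> //; split=> //; split; [by exists x'|exact: upd_same]. Qed.

Lemma gamma_of n (m : 'I_n -> nat) x xh x' :
  compatible m x xh -> alpha m x x' -> gamma xh x'.
Proof.
move=> C A j; have [H0 [H1 H2]] := C j; have [A0 A1] := A j; split=> E.
- have [e|e] := eqVneq (x j) 0; first exact: A0.
  have [e2|e2] := eqVneq (x j) (m j); first by rewrite H1 in E.
  move/eqP: e => e; move/eqP: e2 => e2.
  by case: (H2 e e2); rewrite E.
- have [e2|e2] := eqVneq (x j) (m j); first exact: A1.
  have [e|e] := eqVneq (x j) 0; first by rewrite H0 in E.
  move/eqP: e => e; move/eqP: e2 => e2.
  by case: (H2 e e2); rewrite E.
Qed.

Lemma compat_new n (m : 'I_n -> nat) x (y : mstate n) (xh yh : mpstate n) i :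
  compatible m x xh -> (forall j, j != i -> y j = x j) ->
  (forall j, j != i -> yh j = xh j) ->
  (y i = 0 -> yh i = M0) -> (y i = m i -> yh i = M1) ->
  (y i <> 0 -> y i <> m i -> yh i = Mi \/ yh i = Md) -> compatible m y yh.
Proof.
move=> C Hy Hyh A B D j; case: (eqVneq j i) => [->|ne]; first by [].
rewrite Hy // Hyh //.
Qed.

Definition good n J (f : bstate n -> bstate n) (m : 'I_n -> nat) (xh : mpstate n) y :=
  exists2 yh : mpstate n, mp_traj J f xh yh & (compatible m y yh /\ inXmp J yh).

Ltac cc := move=> *; rewrite ?upd_same; first [by left | by right | done | (exfalso; lia)].
Ltac fin C Hyo := split; [apply: (compat_new C Hyo);
   [move=> j ne; rewrite ?upd_other // | cc | cc | cc]
  | rewrite /=; repeat apply: inXmp_upd; by eauto].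

Lemma step_sim n (f : bstate n -> bstate n) (J : {set 'I_n}) (m : 'I_n -> nat) h x y (xh : mpstate n) :
  (forall j, 1 <= m j) -> (forall j, 1 < m j <-> j \in J) -> refinement m f h ->
  async_step m h x y -> inXmp J xh -> compatible m x xh -> good J f m xh y.
Proof.
move=> Hm HJ R [Hx [Hy [i [Hne [Hyi Hyo]]]]] HX C.
have [R1 R2] := R x Hx i.
have [C0 [C1 C2]] := C i.
have Hyile := Hy i. have Hxile := Hx i. have Hmi := Hm i.
case: (ltnP (h x i) (x i)) => Hlt.
- rewrite Hlt in Hyi. have [x' A Fx] := R1 Hlt. have G := gamma_of C A. have [A0 A1] := A i.
  have [Ff Xi] : f x' i = false /\ x' i = true by move: Fx; case: (f x' i); case: (x' i).
  have xi0 : x i <> 0 by move=> E; rewrite A0 in Xi.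
  case: (boolP (i \in J)) => iJ.
  + have m2 : 1 < m i by apply/HJ.
    have [e|e] := eqVneq (x i) (m i).
    * have E := C1 e.
      exists (upd xh i Md); first by apply: rt_step; apply: (@stepB _ _ _ _ i _ _ _ _ G) => //; try by left.
      fin C Hyo.
    * move/eqP: e => e.
      have [E|E] := C2 xi0 e.
      -- have [e1|e1] := eqVneq (x i) 1.
         ++ exists (upd (upd xh i Md) i M0).
            apply: (@rt_trans _ _ _ (upd xh i Md)); apply: rt_step.
            ** apply: (@stepB _ _ _ _ i _ _ _ _ G) => //; try by right.
            ** apply: stepD => //; [apply: inXmp_upd; by eauto | exact: upd_same].
            fin C Hyo.
         ++ move/eqP: e1 => e1. exists xh; first exact: rt_refl.
            split=> //; apply: (compat_new C Hyo) => //; cc.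
      -- have [e1|e1] := eqVneq (x i) 1.
         ++ exists (upd xh i M0); first by apply: rt_step; apply: stepD.
            fin C Hyo.
         ++ move/eqP: e1 => e1. exists xh; first exact: rt_refl.
            split=> //; apply: (compat_new C Hyo) => //; cc.
  + have m1 : m i = 1.
      have : ~ (1 < m i) by move/HJ; rewrite (negbTE iJ).
      lia.
    have E : xh i = M1 by apply: C1; lia.
    exists (upd xh i M0); first by apply: rt_step; apply: (@stepF _ _ _ _ i _ _ _ _ G).
    fin C Hyo.
- rewrite ltnNge Hlt /= in Hyi.
  have Hlt' : x i < h x i.
    by rewrite ltn_neqAle Hlt andbT.
  have [x' A Fx] := R2 Hlt'. have G := gamma_of C A. have [A0 A1] := A i.
  have [Ff Xi] : f x' i = true /\ x' i = false by move: Fx; case: (f x' i); case: (x' i).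
  case: (boolP (i \in J)) => iJ.
  + have m2 : 1 < m i by apply/HJ.
    have [e|e] := eqVneq (x i) 0.
    * have E := C0 e.
      exists (upd xh i Mi); first by apply: rt_step; apply: (@stepA _ _ _ _ i _ _ _ _ G) => //; try by left.
      fin C Hyo.
    * move/eqP: e => e.
      have xm : x i <> m i by lia.
      have [E|E] := C2 e xm.
      -- have [e1|e1] := eqVneq (x i).+1 (m i).
         ++ exists (upd xh i M1); first by apply: rt_step; apply: stepC.
            fin C Hyo.
         ++ move/eqP: e1 => e1. exists xh; first exact: rt_refl.
            split=> //; apply: (compat_new C Hyo) => //; cc.
      -- have [e1|e1] := eqVneq (x i).+1 (m i).
         ++ exists (upd (upd xh i Mi) i M1).
            apply: (@rt_trans _ _ _ (upd xh i Mi)); apply: rt_step.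
            ** apply: (@stepA _ _ _ _ i _ _ _ _ G) => //; try by right.
            ** apply: stepC => //; [apply: inXmp_upd; by eauto | exact: upd_same].
            fin C Hyo.
         ++ move/eqP: e1 => e1. exists xh; first exact: rt_refl.
            split=> //; apply: (compat_new C Hyo) => //; cc.
  + have m1 : m i = 1.
      have : ~ (1 < m i) by move/HJ; rewrite (negbTE iJ).
      lia.
    have E : xh i = M0 by apply: C0; lia.
    exists (upd xh i M1); first by apply: rt_step; apply: (@stepE _ _ _ _ i _ _ _ _ G).
    fin C Hyo.
Qed.

Lemma traj_sim n (f : bstate n -> bstate n) (J : {set 'I_n}) (m : 'I_n -> nat) h x y :
  (forall j, 1 <= m j) -> (forall j, 1 < m j <-> j \in J) -> refinement m f h ->
  async_traj m h x y -> forall xh : mpstate n, inXmp J xh -> compatible m x xh -> good J f m xh y.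
Proof.
move=> Hm HJ R T; elim: T => {x y} [x y S|x|x y z _ IH1 _ IH2] xh HX C.
- exact: (step_sim Hm HJ R S).
- by exists xh; [exact: rt_refl|].
- have [yh T1 [C1 X1]] := IH1 xh HX C.
  have [zh T2 [C2 X2]] := IH2 yh X1 C1.
  by exists zh; [exact: (rt_trans _ _ _ _ _ T1 T2)|].
Qed.

Theorem theorem2 (n : nat) (f : bstate n -> bstate n) (J : {set 'I_n})
  (m : 'I_n -> nat) (h : mstate n -> mstate n) (x y : mstate n) :
  0 < n ->
  J != set0 ->
  (forall j, 1 <= m j) ->
  (forall j, 1 < m j <-> j \in J) ->
  multivalued_model m h ->
  refinement m f h ->
  inX m x ->
  async_traj m h x y ->
  forall xh : mpstate n, inXmp J xh -> compatible m x xh ->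
    exists2 yh : mpstate n, mp_traj J f xh yh & compatible m y yh.
Proof.
move=> _ _ Hm HJ _ R _ T xh HX C.
have [yh T1 [C1 _]] := traj_sim Hm HJ R T HX C.
by exists yh.
Qed.
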